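(* Let $H'\subseteq E\setminus H$. Then every pair $(s_i,t_i)$, $i\in[k]$, is $(p,q+1)$-flex-connected in $H\cup H'$ if and only if, for every violating edge set $F$, $H'$ is a feasible augmentation for $F$.
   Context: Let $G=(V,E)$ be an undirected graph whose edge set is partitioned into safe edges $\mathcal{S}$ and unsafe edges $\mathcal{U}$, and let $(s_i,t_i)$, $i\in[k]$, be terminal pairs. Vertices $s,t$ are $(p,q)$-flex-connected in an edge set $H$ if every cut $\delta_H(S)$ with $|S\cap\{s,t\}|=1$ contains at least $p$ safe edges or at least $p+q$ edges in total. Let $H\subseteq E$ be such that every pair $(s_i,t_i)$ is $(p,q)$-flex-connected in $H$. A violating edge set is a set $F=\delta_H(S)$ for some $S\subseteq V$ with $|S\cap\{s_i,t_i\}|=1$ for some $i$, such that $|\delta_H(S)|=p+q$ and at most $p-1$ edges of $\delta_H(S)$ are safe. A set $H'\subseteq E\setminus H$ is a feasible augmentation for a violating edge set $F$ if for each $i\in[k]$ there is a path from $s_i$ to $t_i$ in the graph with edge set $(H\cup H')\setminus F$. *)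

(* Defs.v *)
From mathcomp Require Import all_boot.
Set Implicit Arguments. Unset Strict Implicit. Unset Printing Implicit Defensive.

(* An undirected multigraph G = (V,E): each edge e : E has endpoints
   end1 e and end2 e.  The edge set E is the whole finite type E. *)
Section Flex.
Variables (V E : finType) (end1 end2 : E -> V).

Definition cut (H : {set E}) (S : {set V}) : {set E} :=
  [set e in H | (end1 e \in S) != (end2 e \in S)].

Definition separates (S : {set V}) (s t : V) : bool := (s \in S) != (t \in S).

(* s,t are (p,q)-flex-connected in H (safe = set of safe edges;
   unsafe edges are its complement) *)
Definition flex_connected (safe : {set E}) (p q : nat) (H : {set E}) (s t : V) :=
  forall S : {set V}, separates S s t ->
    p <= #|cut H S :&: safe| \/ p + q <= #|cut H S|.

Definition adj (X : {set E}) : rel V :=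
  fun x y => [exists e in X, ((end1 e == x) && (end2 e == y)) ||
                             ((end1 e == y) && (end2 e == x))].

Definition has_path (X : {set E}) (s t : V) : bool := connect (adj X) s t.

Definition violating (safe : {set E}) (p q k : nat) (s t : 'I_k -> V)
    (H F : {set E}) :=
  exists S : {set V}, (exists i : 'I_k, separates S (s i) (t i)) /\
    F = cut H S /\ #|cut H S| = p + q /\ #|cut H S :&: safe| < p.

Definition feasible_aug (k : nat) (s t : 'I_k -> V) (H H' F : {set E}) :=
  forall i : 'I_k, has_path ((H :|: H') :\: F) (s i) (t i).
End Flex.

(* Main.v *)
Require Import Defs.
From mathcomp Require Import all_boot.

Lemma path_cross (V E : finType) (end1 end2 : E -> V) (X : {set E}) (S : {set V}) x y :
  connect (adj end1 end2 X) x y -> (x \in S) != (y \in S) ->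
  exists e, e \in cut end1 end2 X S.
Proof.
move=> /connectP [p Hp ->] {y}.
elim: p x Hp => [|z p IH] x /=; first by rewrite eqxx.
move=> /andP [Hxz Hp] Hne.
case: (boolP ((x \in S) != (z \in S))) => Hxz'.
  move: Hxz => /existsP [e /andP [He /orP [/andP [/eqP E1 /eqP E2]|/andP [/eqP E1 /eqP E2]]]].
    by exists e; rewrite /cut inE He E1 E2.
  by exists e; rewrite /cut inE He E1 E2 eq_sym.
apply: (IH z Hp).
by move: Hne; move: Hxz'; rewrite negbK => /eqP ->.
Qed.

Theorem claim4p1 (V E : finType) (end1 end2 : E -> V) (safe : {set E})
    (p q k : nat) (s t : 'I_k -> V) (H H' : {set E}) :
  (forall i : 'I_k, flex_connected end1 end2 safe p q H (s i) (t i)) ->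
  [disjoint H' & H] ->
  (forall i : 'I_k, flex_connected end1 end2 safe p q.+1 (H :|: H') (s i) (t i))
  <->
  (forall F : {set E}, violating end1 end2 safe p q s t H F ->
     feasible_aug end1 end2 s t H H' F).
Proof.
move=> HH _; split.
- move=> Hflex F [S [[i0 _] [-> [Hc Hs]]]] i.
  apply/negPn/negP => Hnp.
  set X := (H :|: H') :\: cut end1 end2 H S.
  pose T := [set y | connect (adj end1 end2 X) (s i) y].
  have HT : separates T (s i) (t i).
    by rewrite /separates !inE connect0.
  have Hsub : cut end1 end2 (H :|: H') T \subset cut end1 end2 H S.
    apply/subsetP => e; rewrite /cut !inE => /andP [He Hne].
    apply/negPn/negP => HF.
    have HeX : e \in X by rewrite /X /cut !inE (negbTE HF) He.
    have a12 : adj end1 end2 X (end1 e) (end2 e).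
      by apply/existsP; exists e; rewrite HeX !eqxx.
    have a21 : adj end1 end2 X (end2 e) (end1 e).
      by apply/existsP; exists e; rewrite HeX !eqxx orbT.
    move: Hne.
    case: (boolP (connect _ (s i) (end1 e))) => C1; case: (boolP (connect _ (s i) (end2 e))) => C2 //= _.
    + by move/negP: C2; apply; apply: connect_trans C1 (connect1 a12).
    + by move/negP: C1; apply; apply: connect_trans C2 (connect1 a21).
  case: (Hflex i T HT) => Hle.
  + have := leq_trans Hle (subset_leq_card (setSI safe Hsub)).
    by rewrite leqNgt Hs.
  + have := leq_trans Hle (subset_leq_card Hsub).
    by rewrite Hc addnS ltnn.
- move=> Haug i S Hsep.
  have Hmono : cut end1 end2 H S \subset cut end1 end2 (H :|: H') S.
    by apply/subsetP => e; rewrite /cut !inE => /andP [-> ->].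
  case: (HH i S Hsep) => Hle.
    by left; apply: leq_trans Hle (subset_leq_card (setSI safe Hmono)).
  case: (ltnP #|cut end1 end2 H S :&: safe| p) => Hs; last by left; apply: leq_trans Hs (subset_leq_card (setSI safe Hmono)).
  case: (ltnP (p + q) #|cut end1 end2 H S|) => Hc.
    by right; rewrite addnS; apply: leq_trans Hc (subset_leq_card Hmono).
  have Heq : #|cut end1 end2 H S| = p + q by apply/eqP; rewrite eqn_leq Hc Hle.
  have Hv : violating end1 end2 safe p q s t H (cut end1 end2 H S).
    by exists S; split; [exists i|].
  have [e He] := @path_cross _ _ _ _ _ _ _ _ (Haug _ Hv i) Hsep.
  move: He; rewrite /cut !inE => /andP [/andP [HeF HeHH'] Hcr].
  right.
  have Hsub2 : e |: cut end1 end2 H S \subset cut end1 end2 (H :|: H') S.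
    apply/subsetP => f; rewrite !inE => /orP [/eqP ->|/andP [-> ->]] //.
    by rewrite HeHH' Hcr.
  have := subset_leq_card Hsub2.
  rewrite cardsU1 /cut inE HeF Heq addnS /=.
  by [].
Qed.
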